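(* Let $\gamma>0$, $a\in\mathbb{C}$ and $f\in\mathcal{H}_\gamma$. Then $$\mathcal{W}^{\gamma,a}_{RBF}f(z)=\exp\left(\frac{a^2-|a|^2}{\gamma^2}+\frac{2z(\overline a-a)}{\gamma^2}\right)f(z-a),\quad z\in\mathbb{C}.$$ Moreover, $\mathcal{W}^{\gamma,a}_{RBF}$ coincides with the translation operator $T_a[f](z):=f(z-a)$ (i.e. $\mathcal{W}^{\gamma,a}_{RBF}f=T_af$ for all $f\in\mathcal{H}_\gamma$) if and only if $a\in\mathbb{R}$.
   Context: For $\alpha>0$, $\mathcal{F}_\alpha$ is the Fock space of entire $f$ with $\frac{\alpha}{\pi}\int_{\mathbb{C}}|f|^2e^{-\alpha|z|^2}dA<\infty$, and $\mathcal{W}^\alpha_af(z)=f(z-a)\exp\left(\alpha\left(z\overline a-\frac{|a|^2}{2}\right)\right)$ is the Weyl operator on $\mathcal{F}_\alpha$. $\mathcal{H}_\gamma$ is the Hilbert space of entire $f$ with $\frac{2}{\pi\gamma^2}\int_{\mathbb{C}}|f(z)|^2\exp\left(\frac{(z-\overline z)^2}{\gamma^2}\right)dA(z)<\infty$. With $\mathcal{M}^{\gamma^2}_{RBF}f=e^{z^2/\gamma^2}f$ and $\mathcal{M}^{-\gamma^2}_{RBF}g=e^{-z^2/\gamma^2}g$, the RBF-Weyl operator is $\mathcal{W}^{\gamma,a}_{RBF}:=\mathcal{M}^{-\gamma^2}_{RBF}\circ\mathcal{W}^{2/\gamma^2}_a\circ\mathcal{M}^{\gamma^2}_{RBF}$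 on $\mathcal{H}_\gamma$. *)

(* Defs.v *)
From HB Require Import structures.
From mathcomp Require Import all_boot all_order all_algebra.
From mathcomp Require Import all_classical all_reals all_analysis.
From mathcomp Require Import complex.
Set Implicit Arguments. Unset Strict Implicit. Unset Printing Implicit Defensive.
Import Order.TTheory GRing.Theory Num.Theory.
Local Open Scope ring_scope.
Local Open Scope complex_scope.

Section Defs.
Variable R : realType.

Definition cexp (z : R[i]) : R[i] :=
  (expR (complex.Re z) * cos (complex.Im z)) +i*
  (expR (complex.Re z) * sin (complex.Im z)).

Definition cdifferentiable_at (f : R[i] -> R[i]) (z0 : R[i]) : Prop :=
  exists L : R[i], forall eps : R, 0 < eps -> exists delta : R, 0 < delta /\
    forall h : R[i], h != 0 -> `|h| < delta%:C ->
      `|(f (z0 + h) - f z0) / h - L| < eps%:C.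

Definition entire (f : R[i] -> R[i]) : Prop := forall z, cdifferentiable_at f z.

(* identification of (x, y) in R x R with x + iy; Lebesgue measure on C is
   the product Lebesgue measure on R x R *)
Definition cplx_of (p : R * R) : R[i] := p.1 +i* p.2.

Definition H_weight (gamma : R) (f : R[i] -> R[i]) (p : R * R) : R :=
  let z := cplx_of p in
  (2 / (pi * gamma ^+ 2)) * (complex.Re (f z) ^+ 2 + complex.Im (f z) ^+ 2) *
  expR (complex.Re ((z - z^*) ^+ 2) / gamma ^+ 2).

Definition in_H (gamma : R) (f : R[i] -> R[i]) : Prop :=
  entire f /\
  (\int[(@lebesgue_measure R) \x (@lebesgue_measure R)]_(p in setT)
      (H_weight gamma f p)%:E < +oo)%E.

Definition Weyl (alpha : R) (a : R[i]) (f : R[i] -> R[i]) : R[i] -> R[i] :=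
  fun z => f (z - a) * cexp (alpha%:C * (z * a^* - `|a| ^+ 2 / 2%:R)).

Definition M_RBF (gamma : R) (f : R[i] -> R[i]) : R[i] -> R[i] :=
  fun z => cexp (z ^+ 2 / (gamma ^+ 2)%:C) * f z.
Definition M_RBF_inv (gamma : R) (g : R[i] -> R[i]) : R[i] -> R[i] :=
  fun z => cexp (- (z ^+ 2 / (gamma ^+ 2)%:C)) * g z.

Definition RBF_Weyl (gamma : R) (a : R[i]) (f : R[i] -> R[i]) : R[i] -> R[i] :=
  M_RBF_inv gamma (Weyl (2 / gamma ^+ 2) a (M_RBF gamma f)).

Definition transl (a : R[i]) (f : R[i] -> R[i]) : R[i] -> R[i] :=
  fun z => f (z - a).

End Defs.

(* Main.v *)
Require Import Defs.
From HB Require Import structures.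
From mathcomp Require Import all_boot all_order all_algebra.
From mathcomp Require Import all_classical all_reals all_analysis.
From mathcomp Require Import complex.
From mathcomp Require Import ring lra measurable_realfun.
Import Order.TTheory GRing.Theory Num.Theory.
Local Open Scope ring_scope.
Local Open Scope complex_scope.


Section RealBounds.
Import numFieldNormedType.Exports.
Local Open Scope classical_set_scope.
Local Open Scope ring_scope.
Variable R : realType.


Lemma mvt_bound (f df : R -> R) (x B : R) :
  (forall c : R, is_derive c 1 f (df c)) ->
  (forall c, `|c| <= `|x| -> `|df c| <= B) -> `|f x - f 0| <= B * `|x|.
Proof.
move=> hd hB.
have cf : forall a b, {within `[a, b], continuous f}.
  move=> a b; apply: continuous_subspaceT => c.
  apply: differentiable_continuous; apply/derivable1_diffP.
  exact: (@ex_derive _ _ _ c 1 f (df c) (hd c)).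
have B0 : 0 <= B by apply: le_trans (hB 0 _); rewrite ?normr0.
case: (leP 0 x) => hx.
  have [c] := @MVT_segment R f df 0 x hx (fun c _ => hd c) (cf 0 x).
  rewrite in_itv /= => /andP[c0 cx] ->.
  rewrite subr0 normrM ler_wpM2r //; apply: hB.
  by rewrite !ger0_norm // (le_trans c0).
have [c] := @MVT_segment R f df x 0 (ltW hx) (fun c _ => hd c) (cf x 0).
rewrite in_itv /= => /andP[xc c0] e.
rewrite distrC e sub0r normrM normrN ler_wpM2r //; apply: hB.
by rewrite !ler0_norm // ?lerN2 // (le_trans xc) // ltW.
Qed.

Lemma sin_bound (y : R) : `|sin y| <= `|y|.
Proof.
have := @mvt_bound (@sin R) (@cos R) y 1 (fun c => is_derive_sin c) (fun c _ => cos_max c).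
by rewrite sin0 subr0 mul1r.
Qed.

Lemma cos_bound (y : R) : `|cos y - 1| <= y ^+ 2.
Proof.
have := @mvt_bound (@cos R) (fun c => - sin c) y `|y| (fun c => is_derive_cos c).
rewrite cos0 -normrM -expr2 ger0_norm ?sqr_ge0 //; apply.
by move=> c hc; rewrite normrN (le_trans (sin_bound c)).
Qed.

Lemma sinx_bound (y : R) : `|y| <= 1 -> `|sin y - y| <= y ^+ 2.
Proof.
move=> hy.
have hd (c : R) : is_derive c 1 (fun t => sin t - t) (cos c - 1).
  exact: (is_deriveB (is_derive_sin c) (is_derive_id c 1)).
have := @mvt_bound (fun t => sin t - t) (fun c => cos c - 1) y `|y| hd.
rewrite sin0 subr0 subr0 -normrM -expr2 ger0_norm ?sqr_ge0 //; apply.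
move=> c hc; rewrite (le_trans (cos_bound c)) //.
rewrite -(real_normK (num_real c)); have := normr_ge0 c; nra.
Qed.


Lemma expR_le1 (x : R) : `|x| <= 1 -> expR x <= expR 1.
Proof. by move=> h; rewrite ler_expR (le_trans (ler_norm x)). Qed.

Lemma exp1_bound (x : R) : `|x| <= 1 -> `|expR x - 1| <= expR 1 * `|x|.
Proof.
move=> hx.
have := @mvt_bound expR expR x (expR 1) (fun c => is_derive_expR c).
rewrite expR0; apply => c hc.
by rewrite ger0_norm ?expR_ge0 // expR_le1 // (le_trans hc).
Qed.

Lemma exp2_bound (x : R) : `|x| <= 1 -> `|expR x - 1 - x| <= expR 1 * x ^+ 2.
Proof.
move=> hx.
have hd (c : R) : is_derive c 1 (fun t => expR t - t) (expR c - 1).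
  exact: (is_deriveB (is_derive_expR c) (is_derive_id c 1)).
have := @mvt_bound (fun t => expR t - t) (fun c => expR c - 1) x (expR 1 * `|x|) hd.
rewrite expR0 subr0 -mulrA -normrM -expr2 ger0_norm ?sqr_ge0 //; rewrite -addrA [- x - 1]addrC addrA; apply.
move=> c hc; rewrite (le_trans (@exp1_bound c (le_trans hc hx))) //.
by rewrite ler_wpM2l ?expR_ge0.
Qed.

Lemma sqr_le (A k : R) : `|A| <= k -> A ^+ 2 <= k ^+ 2.
Proof.
move=> h; rewrite -(real_normK (num_real A)).
have := normr_ge0 A; nra.
Qed.

Lemma quad_bound (x y : R) : x ^+ 2 + y ^+ 2 <= 1 ->
  (expR x * cos y - 1 - x) ^+ 2 + (expR x * sin y - y) ^+ 2 <=
  (2 * (expR 1 + 1)) ^+ 2 * (x ^+ 2 + y ^+ 2) ^+ 2.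
Proof.
move=> h.
have hx : `|x| <= 1.
  rewrite -(ler_pXn2r (n := 2)) ?nnegrE ?normr_ge0 // real_normK ?num_real //.
  by rewrite expr1n; have := sqr_ge0 y; lra.
have hy : `|y| <= 1.
  rewrite -(ler_pXn2r (n := 2)) ?nnegrE ?normr_ge0 // real_normK ?num_real //.
  by rewrite expr1n; have := sqr_ge0 x; lra.
set E := expR 1.
set r2 := x ^+ 2 + y ^+ 2.
have E0 : 0 <= E by exact: expR_ge0.
have hA : `|expR x * cos y - 1 - x| <= E * r2.
  have -> : expR x * cos y - 1 - x = (expR x - 1 - x) + expR x * (cos y - 1) by ring.
  apply: (le_trans (ler_normD _ _)).
  rewrite normrM ger0_norm ?expR_ge0 // /r2 mulrDr lerD ?exp2_bound //.
  apply: ler_pM; rewrite ?expR_ge0 ?normr_ge0 ?expR_le1 ?cos_bound //.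
have hxy : `|x| * `|y| <= r2.
  rewrite /r2 -(real_normK (num_real x)) -(real_normK (num_real y)).
  have := normr_ge0 x; have := normr_ge0 y; nra.
have hB : `|expR x * sin y - y| <= (E + 1) * r2.
  have -> : expR x * sin y - y = (expR x - 1) * sin y + (sin y - y) by ring.
  apply: (le_trans (ler_normD _ _)).
  rewrite normrM mulrDl mul1r lerD //.
    apply: (le_trans (y := E * `|x| * `|y|)).
      apply: ler_pM; rewrite ?normr_ge0 ?exp1_bound ?sin_bound //.
    by rewrite -mulrA ler_wpM2l.
  by rewrite (le_trans (@sinx_bound y hy)) // /r2 lerDr sqr_ge0.
have := @sqr_le _ _ hA; have := @sqr_le _ _ hB.
have r0 : 0 <= r2 by rewrite /r2 addr_ge0 ?sqr_ge0.
rewrite !exprMn => h1 h2.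
have : (E * r2) ^+ 2 >= 0 by rewrite sqr_ge0.
nra.
Qed.

End RealBounds.

Section Cplx.
Variable R : realType.


Lemma cexpD (u v : R[i]) : cexp (u + v) = cexp u * cexp v.
Proof.
case: u => x y; case: v => x' y'; rewrite /cexp /=; simpc.
rewrite expRD cosD sinD; congr (_ +i* _); ring.
Qed.

Lemma cexp0 : cexp (0 : R[i]) = 1.
Proof. by rewrite /cexp /= expR0 cos0 sin0 mulr1 mulr0. Qed.

Lemma partA (gamma : R) (a : R[i]) f z : 0 < gamma ->
     RBF_Weyl gamma a f z =
     cexp ((a ^+ 2 - `|a| ^+ 2) / (gamma ^+ 2)%:C
           + 2%:R * z * (a^* - a) / (gamma ^+ 2)%:C) * f (z - a).
Proof.
move=> g0.
have gn : (gamma ^+ 2)%:C != 0 :> R[i].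
  by rewrite (inj_eq (@complexI _)) expf_neq0 // gt_eqF.
rewrite /RBF_Weyl /M_RBF_inv /Weyl /M_RBF.
have -> : (a ^+ 2 - `|a| ^+ 2) / (gamma ^+ 2)%:C
           + 2%:R * z * (a^* - a) / (gamma ^+ 2)%:C =
   - (z ^+ 2 / (gamma ^+ 2)%:C) + ((z - a) ^+ 2 / (gamma ^+ 2)%:C +
   (2 / gamma ^+ 2)%:C * (z * a^* - `|a| ^+ 2 / 2%:R)).
  have e2 : (2 / gamma ^+ 2)%:C = 2%:R / (gamma ^+ 2)%:C :> R[i].
    by rewrite rmorphM /= fmorphV /= rmorph_nat.
  rewrite e2.
  field.
  by rewrite fmorph_eq0 gt_eqF.
rewrite !cexpD; ring.
Qed.


Lemma cexp_eq1 (w : R[i]) : cexp w = 1 -> complex.Re w = 0.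
Proof.
case: w => x y; rewrite /cexp /= => -[h1 h2].
have e2 : expR x ^+ 2 = 1.
  have := cos2Dsin2 y => cs.
  have : (expR x * cos y) ^+ 2 + (expR x * sin y) ^+ 2 = 1 by rewrite h1 h2; ring.
  by rewrite !exprMn -mulrDr cs mulr1.
move: e2 => /eqP; rewrite sqrf_eq1 => /orP[/eqP|/eqP] h.
  by apply: expR_inj; rewrite h expR0.
by have := expR_gt0 x; rewrite h; lra.
Qed.

Lemma cexp_neq0 (w : R[i]) : cexp w != 0.
Proof.
apply/negP => /eqP h.
have : cexp w * cexp (- w) = 1 by rewrite -cexpD subrr cexp0.
by rewrite h mul0r => /eqP; rewrite eq_sym oner_eq0.
Qed.

Lemma Re_divC (w : R[i]) (c : R) : complex.Re (w / c%:C) = complex.Re w / c.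
Proof.
rewrite -fmorphV; case: w => x y /=; by simpc.
Qed.

Lemma key (a : R[i]) (gamma : R) : 0 < gamma ->
  complex.Re ((a ^+ 2 - `|a| ^+ 2) / (gamma ^+ 2)%:C) = 0 -> complex.Im a = 0.
Proof.
move=> g0; rewrite Re_divC -add_Re2_Im2.
case: a => p q /=; simpc => /= /eqP.
rewrite mulf_eq0 invr_eq0 expf_eq0 /= (gt_eqF g0) orbF => /eqP h.
have : q ^+ 2 = 0 by lra.
by move/eqP; rewrite expf_eq0 /= => /eqP.
Qed.

Lemma real_exp0 (a : R[i]) (gamma : R) z : complex.Im a = 0 ->
  (a ^+ 2 - `|a| ^+ 2) / (gamma ^+ 2)%:C
           + 2%:R * z * (a^* - a) / (gamma ^+ 2)%:C = 0.
Proof.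
rewrite -add_Re2_Im2; case: a => p q /= ->.
have -> : (p +i* 0) ^+ 2 - ((p ^+ 2 + 0 ^+ 2)%:C) = 0 :> R[i].
  by apply/eqP; rewrite eq_complex /=; simpc; rewrite andbT; apply/eqP; ring.
have -> : (p +i* 0)^* - (p +i* 0) = 0 :> R[i].
  by apply/eqP; rewrite eq_complex /=; simpc.
by rewrite !mulr0 !mul0r addr0.
Qed.



Definition nr (w : R[i]) : R := Num.sqrt (complex.Re w ^+ 2 + complex.Im w ^+ 2).
Lemma nrE (w : R[i]) : `|w| = (nr w)%:C.
Proof. exact: normc_def. Qed.
Lemma nr_ge0 w : 0 <= nr w.
Proof. exact: sqrtr_ge0. Qed.
Lemma nrM (a b : R[i]) : nr (a * b) = nr a * nr b.
Proof. by have := normrM a b; rewrite !nrE -rmorphM => /(@complexI R). Qed.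
Lemma nrD (a b : R[i]) : nr (a + b) <= nr a + nr b.
Proof. by have := ler_normD a b; rewrite !nrE -rmorphD lecR. Qed.
Lemma nrV (a : R[i]) : nr (a^-1) = (nr a)^-1.
Proof. by have := normfV a; rewrite !nrE -fmorphV => /(@complexI R). Qed.
Lemma nr_lt (w : R[i]) e : (`|w| < e%:C) = (nr w < e).
Proof. by rewrite nrE ltcR. Qed.

Lemma cexp_quad (u : R[i]) : nr u <= 1 ->
  nr (cexp u - 1 - u) <= (2 * (expR 1 + 1)) * nr u ^+ 2.
Proof.
case: u => x y; rewrite /nr /cexp /= => h.
have r0 : 0 <= x ^+ 2 + y ^+ 2 by rewrite addr_ge0 ?sqr_ge0.
rewrite sqr_sqrtr //.
have h1 : x ^+ 2 + y ^+ 2 <= 1.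
  by rewrite -(@ler_sqrt _ _ 1 ler01) sqrtr1.
have M0 : 0 <= 2 * (expR 1 + 1) :> R by rewrite mulr_ge0 ?addr_ge0 ?expR_ge0.
rewrite -[X in _ <= X]ger0_norm ?mulr_ge0 // -sqrtr_sqr exprMn.
apply: ler_wsqrtr; rewrite subr0; exact: quad_bound.
Qed.

Lemma nr_eq0 (w : R[i]) : w != 0 -> 0 < nr w.
Proof.
move=> w0; rewrite lt_def nr_ge0 andbT; apply/eqP => h.
by move: w0; rewrite -normr_eq0 nrE h eqxx.
Qed.

Lemma cdiff_sq (c z0 : R[i]) : cdifferentiable_at (fun z => cexp (c * z ^+ 2)) z0.
Proof.
set E := cexp (c * z0 ^+ 2).
exists (2%:R * c * z0 * E) => eps eps0.
pose M : R := 2 * (expR 1 + 1).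
pose A := nr E. pose Cc := nr c. pose Bu : R := Cc * (2 * nr z0 + 1).
pose K : R := A * (M * Bu ^+ 2 + Cc).
have M0 : 0 <= M by rewrite mulr_ge0 ?addr_ge0 ?expR_ge0.
have A0 : 0 <= A by exact: nr_ge0.
have Cc0 : 0 <= Cc by exact: nr_ge0.
have Bu0 : 0 <= Bu by rewrite mulr_ge0 ?addr_ge0 ?mulr_ge0 ?nr_ge0.
have K0 : 0 <= K by rewrite /K mulr_ge0 // addr_ge0 // mulr_ge0 // sqr_ge0.
exists (Num.min 1 (Num.min (Bu + 1)^-1 (eps / (K + 1)))).
split.
  rewrite !lt_min ltr01 /= invr_gt0 divr_gt0 //; lra.
move=> h hn0; rewrite nr_lt => hlt.
move: hlt; rewrite !lt_min => /andP[ht1 /andP[ht2 ht3]].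
set t := nr h.
have t0 : 0 < t by exact: nr_eq0.
set u := c * (z0 * h + z0 * h + h * h).
have eq : (cexp (c * (z0 + h) ^+ 2) - E) / h - 2%:R * c * z0 * E =
    E * ((cexp u - 1 - u) / h + c * h).
  have -> : c * (z0 + h) ^+ 2 = c * z0 ^+ 2 + u by rewrite /u; ring.
  rewrite cexpD -/E; move: (cexp u) => w; rewrite /u; field; exact: hn0.
rewrite nr_lt eq nrM -/A.
have nu : nr u <= Bu * t.
  rewrite /u nrM -/Cc /Bu -mulrA ler_wpM2l //.
  apply: (le_trans (nrD _ _)); rewrite !nrM -/t.
  apply: (le_trans (lerD (nrD _ _) (lexx _))); rewrite !nrM -/t.
  have : t * t <= t * 1 by rewrite ler_wpM2l ?ltW. lra.
have nu1 : nr u <= 1.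
  apply: (le_trans nu).
  have : t * (Bu + 1) < 1 by rewrite -ltr_pdivlMr ?div1r //; lra.
  nra.
have q := @cexp_quad u nu1.
have hX : nr ((cexp u - 1 - u) / h) <= M * Bu ^+ 2 * t.
  rewrite nrM nrV -/t ler_pdivrMr //.
  apply: (le_trans q); rewrite -/M.
  have : nr u ^+ 2 <= (Bu * t) ^+ 2.
    by apply: sqr_le; rewrite ger0_norm ?nr_ge0.
  nra.
have hY : nr ((cexp u - 1 - u) / h + c * h) <= (M * Bu ^+ 2 + Cc) * t.
  apply: (le_trans (nrD _ _)); rewrite (nrM c h) -/Cc -/t (mulrDl (M * Bu ^+ 2)); exact: lerD.
have : A * nr ((cexp u - 1 - u) / h + c * h) <= K * t.
  by rewrite /K -mulrA ler_wpM2l.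
have : K * t < eps.
  have : t * (K + 1) < eps by rewrite -ltr_pdivlMr //; lra.
  nra.
lra.
Qed.


Definition f0 (gamma : R) (z : R[i]) : R[i] := cexp (- (z ^+ 2 / (gamma ^+ 2)%:C)).


Lemma normcexp2 (w : R[i]) : complex.Re (cexp w) ^+ 2 + complex.Im (cexp w) ^+ 2 = expR (complex.Re w) ^+ 2.
Proof. by rewrite /cexp /= !exprMn -mulrDr cos2Dsin2 mulr1. Qed.

Lemma Hw_eq (gamma : R) (x y : R) : 0 < gamma ->
  H_weight gamma (f0 gamma) (x, y) =
  (2 / (pi * gamma ^+ 2)) / (normal_peak (gamma / 2)) ^+ 2 *
   normal_pdf 0 (gamma / 2) x * normal_pdf 0 (gamma / 2) y.
Proof.
move=> g0.
have s0 : gamma / 2 != 0 by rewrite mulf_neq0 // ?gt_eqF // invr_gt0.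
have p0 : normal_peak (gamma / 2) != 0 by rewrite gt_eqF // normal_peak_gt0.
rewrite /H_weight /f0 normcexp2 /cplx_of /= /normal_pdf (negbTE s0) /normal_fun.
have gn : gamma != 0 by rewrite gt_eqF.
rewrite -expRM_natr -mulrA -expRD.
transitivity (2 / (pi * gamma ^+ 2) * expR (- (x - 0) ^+ 2 / ((gamma / 2) ^+ 2 *+ 2) +
   - (y - 0) ^+ 2 / ((gamma / 2) ^+ 2 *+ 2))).
  congr (_ * expR _); rewrite -mulr_natr; field; by rewrite gn.
rewrite expRD; move: (@pi R) (@pi_gt0 R) => P P0; field; by rewrite p0 gn gt_eqF.
Qed.

Section IntFin.
Local Open Scope ereal_scope.
Lemma int_fin (gamma : R) : (0 < gamma)%R ->
  (\int[(@lebesgue_measure R) \x (@lebesgue_measure R)]_(p in setT)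
      (H_weight gamma (f0 gamma) p)%:E < +oo)%E.
Proof.
move=> g0.
set K := ((2 / (pi * gamma ^+ 2)) / (normal_peak (gamma / 2)) ^+ 2)%R.
have K0 : (0 <= K)%R.
  by rewrite /K divr_ge0 ?sqr_ge0 // divr_ge0 // mulr_ge0 ?pi_ge0 ?sqr_ge0.
set g := normal_pdf 0%R (gamma / 2)%R.
have -> : (fun p => (H_weight gamma (f0 gamma) p)%:E) =
    (fun p => (K * g p.1 * g p.2)%R%:E).
  by apply/funext => -[x y]; rewrite Hw_eq.
have mg : measurable_fun setT g by exact: measurable_normal_pdf.
have g0' x : (0 <= g x)%R by exact: normal_pdf_ge0.
rewrite fubini_tonelli1 /=; first last.
- by move=> p; rewrite lee_fin mulr_ge0 // mulr_ge0.
- apply/measurable_EFinP; apply: measurable_funM; last first.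
    exact: measurableT_comp mg measurable_snd.
  apply: measurable_funM => //.
  exact: measurableT_comp mg measurable_fst.
rewrite /fubini_F /=.
have inner x : \int[lebesgue_measure]_y (K * g x * g y)%R%:E = (K * g x)%R%:E.
  under eq_integral do rewrite EFinM.
  rewrite ge0_integralZl_EFin //.
  - by rewrite integral_normal_pdf mule1.
  - by move=> y _; rewrite lee_fin.
  - by apply/measurable_EFinP.
  - by rewrite mulr_ge0.
under eq_integral do rewrite inner.
under eq_integral do rewrite EFinM.
rewrite ge0_integralZl_EFin //.
- by rewrite integral_normal_pdf mule1 ltry.
- by move=> y _; rewrite lee_fin.
- by apply/measurable_EFinP.
Qed.
End IntFin.

Lemma f0_entire (gamma : R) : entire (f0 gamma).
Proof.
move=> z.
have -> : f0 gamma = fun z => cexp (- ((gamma ^+ 2)%:C)^-1 * z ^+ 2).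
  by apply/funext => w; rewrite /f0 mulNr mulrC.
exact: cdiff_sq.
Qed.

Lemma f0_inH (gamma : R) : 0 < gamma -> in_H gamma (f0 gamma).
Proof. by move=> g0; split; [exact: f0_entire | exact: int_fin]. Qed.
End Cplx.

Theorem mainTheorem17 (R : realType) (gamma : R) (a : R[i]) :
  0 < gamma ->
  (forall f : R[i] -> R[i], in_H gamma f -> forall z : R[i],
     RBF_Weyl gamma a f z =
     cexp ((a ^+ 2 - `|a| ^+ 2) / (gamma ^+ 2)%:C
           + 2%:R * z * (a^* - a) / (gamma ^+ 2)%:C) * f (z - a))
  /\
  ((forall f : R[i] -> R[i], in_H gamma f -> RBF_Weyl gamma a f = transl a f)
     <-> complex.Im a = 0).
Proof.
move=> g0; split.
  by move=> f _ z; exact: partA.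
split.
  move=> H.
  have := H _ (@f0_inH R gamma g0).
  move=> /(congr1 (fun F => F 0)); rewrite /transl partA // => e.
  have : cexp ((a ^+ 2 - `|a| ^+ 2) / (gamma ^+ 2)%:C
           + 2%:R * 0 * (a^* - a) / (gamma ^+ 2)%:C) = 1.
    by apply: (mulIf (@cexp_neq0 R (- (((0 - a) ^+ 2) / (gamma ^+ 2)%:C)))); rewrite mul1r.
  rewrite mulr0 !mul0r addr0 => /cexp_eq1.
  exact: key.
move=> ha f _; apply/funext => z.
by rewrite partA // real_exp0 // cexp0 mul1r.
Qed.
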